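(* (a) For $n\ge 2$ and $1\le d\le n$, in $B_n$: $$[1,n]^d=[d,1]\,[1,n]\,[1,n-1]^{d-1}\quad\text{and}\quad [n,1]^d=[n-1,1]^{d-1}\,[n,1]\,[1,d].$$ (b) Let $1\le\rho\le m$, $x\ge 0$, $m+x\ge 2$, and $\gamma\in B_m$, where $B_m\subseteq B_{m+x}$ via the standard inclusion. Then $$\widehat{\gamma[1,m+x]^{\rho}}=\widehat{\gamma[\rho,1]^x[1,m]^{\rho}}\quad\text{and}\quad\widehat{\gamma[m+x,1]^{\rho}}=\widehat{\gamma[m,1]^{\rho}[1,\rho]^x},$$ where the left sides are closures in $B_{m+x}$ and the right sides are closures in $B_m$. (c) For T-links: $T((m,y),(n,\rho))=\widehat{[\rho,1]^{n-m}[1,m]^{\rho+y}}$ for $2\le\rho\le m\le n$ and $1\le y$; $T((2,y),(n,\rho))=T((2,y),(\rho,n))$ for $2\le\rho,n$ and $1\le y$; $T((m,y),(n,m))=T(m,n+y)$ for $2\le m<n$ with $n\equiv 0\pmod m$ (and $y\ge 1$).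
   Context: $B_n$ is the braid group on $n$ strands with standard generators $\sigma_1,\dots,\sigma_{n-1}$; $\widehat\beta$ denotes the closure. For $a<b$, $[a,b]=\sigma_a\sigma_{a+1}\cdots\sigma_{b-1}$; for $a>b$, $[a,b]=\sigma_{a-1}\sigma_{a-2}\cdots\sigma_b$; $[a,a]=1$. A T-link $T((r_1,s_1),\dots,(r_k,s_k))$, with integers $2\le r_1\le\dots\le r_k$ and $s_i>0$, is the closure of $[1,r_1]^{s_1}\cdots[1,r_k]^{s_k}\in B_{r_k}$; the torus link $T(m,n)$ is $T((m,n))$, the closure of $[1,m]^n\in B_m$. *)

(* Defs.v *)
From mathcomp Require Import all_boot.
From Stdlib Require Import Relation_Operators.
Set Implicit Arguments. Unset Strict Implicit. Unset Printing Implicit Defensive.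

(* A braid word: a letter (i, true) is sigma_i, (i, false) is sigma_i^{-1}. *)
Definition letter := (nat * bool)%type.
Definition bword := seq letter.

Definition valid (n : nat) (w : bword) : bool :=
  all (fun l : letter => (1 <= l.1) && (l.1 < n)) w.

Inductive braid_rel (n : nat) : bword -> bword -> Prop :=
| br_free i b : 1 <= i -> i < n -> braid_rel n [:: (i, b); (i, ~~ b)] [::]
| br_far i j : 1 <= i -> i.+1 < j -> j < n ->
    braid_rel n [:: (i, true); (j, true)] [:: (j, true); (i, true)]
| br_braid i : 1 <= i -> i.+1 < n ->
    braid_rel n [:: (i, true); (i.+1, true); (i, true)]
                [:: (i.+1, true); (i, true); (i.+1, true)].

Inductive braid_step (n : nat) : bword -> bword -> Prop :=
| bs_step u v l r : braid_rel n l r -> braid_step n (u ++ l ++ v) (u ++ r ++ v).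

Definition braid_eq (n : nat) : bword -> bword -> Prop :=
  clos_refl_sym_trans bword (braid_step n).

Definition seg (a b : nat) : bword :=
  if a < b then [seq (i, true) | i <- iota a (b - a)]
  else rev [seq (i, true) | i <- iota b (a - b)].

Definition wpow (w : bword) (k : nat) : bword := flatten (nseq k w).

(* Equality of closures: (n, w) and (n', w') have the same closure (as
   oriented links).  Realized combinatorially via Markov moves
   (Markov's theorem): braid equality, conjugation, stabilization. *)
Inductive closure_eq : nat -> bword -> nat -> bword -> Prop :=
| ce_braid n w w' : 1 <= n -> valid n w -> valid n w' -> braid_eq n w w' ->
    closure_eq n w n w'
| ce_conj n u w : 1 <= n -> valid n u -> valid n w ->
    closure_eq n (u ++ w) n (w ++ u)
| ce_stab n w b : 1 <= n -> valid n w ->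
    closure_eq n w n.+1 (w ++ [:: (n, b)])
| ce_sym n w n' w' : closure_eq n w n' w' -> closure_eq n' w' n w
| ce_trans n w n' w' n'' w'' : closure_eq n w n' w' -> closure_eq n' w' n'' w'' ->
    closure_eq n w n'' w''.

(* T-link T((r_1,s_1),...,(r_k,s_k)) as a braid word in B_{r_k}. *)
Definition tword (ps : seq (nat * nat)) : bword :=
  flatten [seq wpow (seg 1 p.1) p.2 | p <- ps].
Definition tstrands (ps : seq (nat * nat)) : nat := (last (0, 0) ps).1.
Definition tlink_eq (ps qs : seq (nat * nat)) : Prop :=
  closure_eq (tstrands ps) (tword ps) (tstrands qs) (tword qs).

(* Main.v *)
Require Import Defs.
From mathcomp Require Import all_boot zify.
From Stdlib Require Import Relation_Operators.
Set Implicit Arguments. Unset Strict Implicit. Unset Printing Implicit Defensive.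

Lemma beq_refl n w : braid_eq n w w.
Proof. exact: rst_refl. Qed.
Lemma beq_sym n u v : braid_eq n u v -> braid_eq n v u.
Proof. exact: rst_sym. Qed.
Lemma beq_trans n u v w : braid_eq n u v -> braid_eq n v w -> braid_eq n u w.
Proof. exact: rst_trans. Qed.
Lemma beq_rel n l r : braid_rel n l r -> braid_eq n l r.
Proof. move=> H; apply: rst_step; have := bs_step [::] [::] H; by rewrite /= !cats0. Qed.

Lemma beq_ctx n a b u v : braid_eq n u v -> braid_eq n (a ++ u ++ b) (a ++ v ++ b).
Proof.
elim=> [x y [u0 v0 l r H]|x|x y _ IH|x y z _ IH1 _ IH2].
- apply: rst_step. have := bs_step (a ++ u0) (v0 ++ b) H. by rewrite -!catA.
- exact: beq_refl.
- exact: beq_sym.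
- exact: beq_trans IH1 IH2.
Qed.
Lemma beq_catl n a u v : braid_eq n u v -> braid_eq n (a ++ u) (a ++ v).
Proof. move=> H; have := beq_ctx a [::] H; by rewrite !cats0. Qed.
Lemma beq_catr n b u v : braid_eq n u v -> braid_eq n (u ++ b) (v ++ b).
Proof. move=> H; exact: (beq_ctx [::] b H). Qed.
Lemma beq_cat n u v u' v' : braid_eq n u v -> braid_eq n u' v' -> braid_eq n (u ++ u') (v ++ v').
Proof. move=> H1 H2; apply: beq_trans (beq_catr _ H1) (beq_catl _ H2). Qed.

Lemma brel_mono n n' l r : n <= n' -> braid_rel n l r -> braid_rel n' l r.
Proof.
move=> le [i b h1 h2|i j h1 h2 h3|i h1 h2].
- apply: br_free => //; lia.
- apply: br_far => //; lia.
- apply: br_braid => //; lia.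
Qed.
Lemma beq_mono n n' u v : n <= n' -> braid_eq n u v -> braid_eq n' u v.
Proof.
move=> le; elim=> [x y [u0 v0 l r H]|x|x y _ IH|x y z _ IH1 _ IH2].
- apply: rst_step; apply: bs_step; exact: brel_mono H.
- exact: beq_refl.
- exact: beq_sym.
- exact: beq_trans IH1 IH2.
Qed.

Lemma brel_rev n l r : braid_rel n l r -> braid_eq n (rev l) (rev r).
Proof.
case=> [i b h1 h2|i j h1 h2 h3|i h1 h2].
- apply: beq_rel; have := @br_free n i (~~ b) h1 h2; by rewrite negbK.
- apply: beq_sym; apply: beq_rel; exact: br_far.
- apply: beq_rel; exact: br_braid.
Qed.
Lemma beq_rev n u v : braid_eq n u v -> braid_eq n (rev u) (rev v).
Proof.
elim=> [x y [u0 v0 l r H]|x|x y _ IH|x y z _ IH1 _ IH2].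
- rewrite !rev_cat -!catA; apply: beq_ctx; exact: brel_rev.
- exact: beq_refl.
- exact: beq_sym.
- exact: beq_trans IH1 IH2.
Qed.

Definition up a k : bword := [seq (j, true) | j <- iota a k].
Lemma seg_up a b : a <= b -> seg a b = up a (b - a).
Proof. rewrite /seg leq_eqVlt => /orP [/eqP->|->] //. by rewrite ltnn subnn. Qed.
Lemma seg_down a b : b <= a -> seg a b = rev (up b (a - b)).
Proof. by rewrite /seg ltnNge => ->. Qed.
Lemma seg_rev a b : seg b a = rev (seg a b).
Proof.
case: (leqP a b) => h.
- by rewrite (seg_down h) (seg_up h).
- have h' := ltnW h. by rewrite (seg_up h') (seg_down h') revK.
Qed.

Lemma wpowS w k : wpow w k.+1 = w ++ wpow w k.
Proof. by []. Qed.
Lemma wpow0 w : wpow w 0 = [::].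
Proof. by []. Qed.
Lemma wpowD w a b : wpow w (a + b) = wpow w a ++ wpow w b.
Proof. elim: a => // a IH. by rewrite addSn !wpowS IH catA. Qed.
Lemma wpowSr w k : wpow w k.+1 = wpow w k ++ w.
Proof. by rewrite -addn1 wpowD /wpow /= cats0. Qed.
Lemma wpowM w a b : wpow w (a * b) = wpow (wpow w a) b.
Proof. elim: b => [|b IH]; first by rewrite muln0. by rewrite mulnS wpowD IH. Qed.
Lemma rev_wpow w k : rev (wpow w k) = wpow (rev w) k.
Proof. elim: k => [|k IH] //. by rewrite wpowS rev_cat IH -wpowSr. Qed.
Lemma beq_wpow n u v k : braid_eq n u v -> braid_eq n (wpow u k) (wpow v k).
Proof. move=> H; elim: k => [|k IH]; first exact: beq_refl. exact: beq_cat. Qed.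

Lemma valid_cat n u v : valid n (u ++ v) = valid n u && valid n v.
Proof. exact: all_cat. Qed.
Lemma valid_rev n u : valid n (rev u) = valid n u.
Proof. exact: all_rev. Qed.
Lemma valid_wpow n u k : valid n u -> valid n (wpow u k).
Proof. move=> h; elim: k => //= k IH; by rewrite valid_cat h. Qed.
Lemma valid_le n n' u : n <= n' -> valid n u -> valid n' u.
Proof. move=> le; apply: sub_all => l /andP [h1 h2]; apply/andP; split => //; lia. Qed.
Lemma valid_up n a k : 1 <= a -> a + k <= n -> valid n (up a k).
Proof.
move=> h1 h2; rewrite /valid all_map; apply/allP => j; rewrite mem_iota /= => /andP [h h']; apply/andP; split; [exact: leq_trans h1 h | exact: leq_trans h' h2].
Qed.
Lemma valid_seg n a b : 1 <= a -> 1 <= b -> a <= n -> b <= n -> valid n (seg a b).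
Proof.
move=> h1 h2 h3 h4; case: (leqP a b) => h.
- rewrite seg_up //; apply: valid_up => //; lia.
- rewrite seg_down ?valid_rev; last lia. apply: valid_up => //; lia.
Qed.


Definition sig i : letter := (i, true).
Definition posin lo hi (w : bword) := all (fun l : letter => l.2 && (lo <= l.1) && (l.1 < hi)) w.
Definition shiftl (l : letter) : letter := (l.1.+1, l.2).

Lemma posin_cat lo hi u v : posin lo hi (u ++ v) = posin lo hi u && posin lo hi v.
Proof. exact: all_cat. Qed.
Lemma posin_rev lo hi u : posin lo hi (rev u) = posin lo hi u.
Proof. exact: all_rev. Qed.
Lemma posin_wpow lo hi u k : posin lo hi u -> posin lo hi (wpow u k).
Proof. move=> h; elim: k => //= k IH; by rewrite posin_cat h. Qed.
Lemma posin_up lo hi a k : lo <= a -> a + k <= hi -> posin lo hi (up a k).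
Proof.
move=> h1 h2; rewrite /posin all_map; apply/allP => j; rewrite mem_iota /= => /andP [h h'].
apply/andP; split; [exact: leq_trans h1 h | exact: leq_trans h' h2].
Qed.
Lemma posin_seg lo hi a b : lo <= a -> lo <= b -> a <= hi -> b <= hi -> posin lo hi (seg a b).
Proof.
move=> h1 h2 h3 h4; case: (leqP a b) => h.
- rewrite seg_up //; apply: posin_up => //; lia.
- rewrite seg_down ?posin_rev; last lia. apply: posin_up => //; lia.
Qed.
Lemma posin_valid n w : posin 1 n w -> valid n w.
Proof. apply: sub_all => l /andP [/andP [_ h1] h2]; by rewrite h1 h2. Qed.

Lemma upS a k : up a k.+1 = (a, true) :: up a.+1 k.
Proof. by []. Qed.
Lemma up_cat a k1 k2 : up a (k1 + k2) = up a k1 ++ up (a + k1) k2.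
Proof. by rewrite /up iotaD map_cat. Qed.
Lemma up_shift a k : map shiftl (up a k) = up a.+1 k.
Proof. elim: k a => //= k IH a. by rewrite IH. Qed.
Lemma upSr a k : up a k.+1 = up a k ++ [:: (a + k, true)].
Proof. by rewrite -addn1 up_cat. Qed.

Lemma farb (n i j : nat) : 1 <= i -> i.+1 < j -> j < n ->
  braid_eq n [:: sig i; sig j] [:: sig j; sig i].
Proof. move=> *; apply: beq_rel; exact: br_far. Qed.

Lemma comm_letter n j w : 1 <= j -> j < n ->
  all (fun l : letter => l.2 && (1 <= l.1) && (l.1 < n) && ((l.1.+1 < j) || (j.+1 < l.1))) w ->
  braid_eq n (w ++ [:: sig j]) (sig j :: w).
Proof.
move=> hj1 hj2; elim: w => [|[i b] w IH] /=; first by move=> _; exact: beq_refl.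
case/andP=> /andP [/andP [/andP [hb hi1] hi2] hf] hw. case: b hb => // _.
apply: (beq_trans (v := sig i :: sig j :: w)).
  exact: (beq_catl [:: sig i] (IH hw)).
have := @beq_ctx n [::] w [:: sig i; sig j] [:: sig j; sig i]; rewrite /=; apply.
case/orP: hf => hf; first exact: farb.
apply: beq_sym; apply: farb => //; lia.
Qed.

Lemma farw_posin n j lo hi w : posin lo hi w -> 1 <= lo -> hi <= n ->
  (hi < j) || (j.+1 < lo) ->
  all (fun l : letter => l.2 && (1 <= l.1) && (l.1 < n) && ((l.1.+1 < j) || (j.+1 < l.1))) w.
Proof.
move=> hw h1 h2 h3; apply: sub_all hw => [[i b]] /= /andP [/andP [-> hi1] hi2] /=.
apply/andP; split; first (apply/andP; split; lia).
case/orP: h3 => h; apply/orP; [left|right]; lia.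
Qed.

Lemma seg1_split N i : 1 <= i -> i.+1 < N ->
  seg 1 N = up 1 i.-1 ++ [:: sig i; sig i.+1] ++ up i.+2 (N - i.+2).
Proof.
move=> h1 h2; rewrite seg_up; last lia.
have -> : N - 1 = i.-1 + (2 + (N - i.+2)) by lia.
rewrite up_cat up_cat; congr (_ ++ _).
have -> : 1 + i.-1 = i by lia.
by rewrite addn2.
Qed.

Lemma shift1 N i : 1 <= i -> i.+1 < N ->
  braid_eq N (seg 1 N ++ [:: sig i]) (sig i.+1 :: seg 1 N).
Proof.
move=> h1 h2; rewrite (seg1_split h1 h2).
set A := up 1 i.-1; set C := up i.+2 (N - i.+2).
apply: (beq_trans (v := A ++ [:: sig i; sig i.+1; sig i] ++ C)).
  rewrite -!catA; apply: (beq_catl A) => /=; apply: (beq_catl [:: sig i; sig i.+1]).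
  apply: comm_letter => //; first lia.
  apply: (farw_posin (lo := i.+2) (hi := N)) => //; try lia.
  apply: posin_up; lia.
apply: (beq_trans (v := (A ++ [:: sig i.+1]) ++ [:: sig i; sig i.+1] ++ C)).
  rewrite -catA; apply: beq_catl.
  have := @beq_ctx N [::] C [:: sig i; sig i.+1; sig i] [:: sig i.+1; sig i; sig i.+1].
  rewrite /=; apply; apply: beq_rel; exact: br_braid.
apply: (@beq_catr N _ (A ++ [:: sig i.+1]) (sig i.+1 :: A)).
apply: comm_letter; try lia.
apply: (farw_posin (lo := 1) (hi := i)) => //; try lia.
apply: posin_up; lia.
Qed.

Lemma shiftw N w : posin 1 N.-1 w ->
  braid_eq N (seg 1 N ++ w) (map shiftl w ++ seg 1 N).
Proof.
elim: w => [|[i b] w IH] /=; first by move=> _; rewrite cats0; exact: beq_refl.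
case/andP=> /andP [/andP [hb hi1] hi2] hw; case: b hb => // _.
apply: (beq_trans (v := (sig i.+1 :: seg 1 N) ++ w)).
  have -> : seg 1 N ++ (i, true) :: w = (seg 1 N ++ [:: sig i]) ++ w by rewrite -catA.
  apply: beq_catr; apply: shift1 => //; lia.
exact: (beq_catl [:: sig i.+1] (IH hw)).
Qed.

Lemma shiftw_rev N w : posin 1 N.-1 w ->
  braid_eq N (w ++ seg N 1) (seg N 1 ++ map shiftl w).
Proof.
move=> hw; have hw' : posin 1 N.-1 (rev w) by rewrite posin_rev.
have := beq_rev (@shiftw N (rev w) hw').
by rewrite !rev_cat revK map_rev revK -seg_rev.
Qed.

Lemma seg_sq N : 2 <= N ->
  braid_eq N (seg 1 N ++ seg 1 N) (sig 1 :: seg 1 N ++ seg 1 N.-1).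
Proof.
move=> hN; apply: beq_sym.
apply: (beq_trans (v := sig 1 :: seg 2 N ++ seg 1 N)).
  apply: (beq_catl [:: sig 1]).
  have := @shiftw N (seg 1 N.-1) (posin_seg _ _ _ _); rewrite (seg_up (a:=1) (b:=N.-1)); last lia.
  rewrite up_shift (seg_up (a:=2) (b:=N)); last lia.
  have -> : N - 2 = N.-1 - 1 by lia.
  apply; lia.
rewrite (seg_up (a:=2)) ?(seg_up (a:=1) (b:=N)); try lia.
have -> : N - 1 = (N - 2).+1 by lia.
by rewrite upS; exact: beq_refl.
Qed.

Lemma partA1 N d : 2 <= N -> d.+1 <= N ->
  braid_eq N (wpow (seg 1 N) d.+1) (seg d.+1 1 ++ seg 1 N ++ wpow (seg 1 N.-1) d).
Proof.
move=> hN; elim: d => [|d IH] hd.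
  by rewrite (seg_down (a:=1) (b:=1)) //= /wpow /= cats0; exact: beq_refl.
set w := seg 1 N; set W := wpow (seg 1 N.-1) d.
have e1 : map shiftl (seg d.+1 1) = rev (up 2 d).
  by rewrite seg_down // map_rev up_shift subn1.
apply: (beq_trans (v := w ++ (seg d.+1 1 ++ w ++ W))).
  rewrite wpowS; apply: beq_catl; apply: IH; lia.
apply: (beq_trans (v := (map shiftl (seg d.+1 1) ++ w) ++ w ++ W)).
  rewrite catA; apply: beq_catr; apply: shiftw; apply: posin_seg; lia.
rewrite e1.
apply: (beq_trans (v := rev (up 2 d) ++ (sig 1 :: w ++ seg 1 N.-1) ++ W)).
  rewrite -catA (catA w w W); apply: beq_catl; apply: beq_catr; exact: seg_sq.
have -> : seg d.+2 1 = rev (up 1 d.+1) by rewrite seg_down.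
rewrite upS rev_cons -cats1 wpowS -!catA /=.
by rewrite -catA; exact: beq_refl.
Qed.

Lemma partA2 N d : 2 <= N -> d.+1 <= N ->
  braid_eq N (wpow (seg N 1) d.+1) (wpow (seg N.-1 1) d ++ seg N 1 ++ seg 1 d.+1).
Proof.
move=> h1 h2; have := beq_rev (partA1 h1 h2).
by rewrite rev_wpow -seg_rev !rev_cat rev_wpow -!seg_rev catA.
Qed.

Lemma partA n d : 2 <= n -> 1 <= d <= n ->
     braid_eq n (wpow (seg 1 n) d)
                (seg d 1 ++ seg 1 n ++ wpow (seg 1 n.-1) d.-1)
  /\ braid_eq n (wpow (seg n 1) d)
                (wpow (seg n.-1 1) d.-1 ++ seg n 1 ++ seg 1 d).
Proof.
move=> h1 /andP [h2 h3]; case: d h2 h3 => // d _ h3.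
split; [exact: partA1 | exact: partA2].
Qed.

Ltac vtac := repeat match goal with
 | |- is_true (valid _ (_ ++ _)) => rewrite valid_cat; apply/andP; split
 | |- is_true (valid _ (wpow _ _)) => apply: valid_wpow
 | |- is_true (valid _ (seg _ _)) => apply: valid_seg; lia
 | |- is_true (valid _ [:: _]) => rewrite /valid /= ?andbT; try (apply/andP; split); lia
 | H : is_true (valid ?m ?g) |- is_true (valid _ ?g) => apply: (valid_le _ H); lia
 | |- is_true (0 < _) => lia
 end.

Lemma ce_refl n w : 1 <= n -> valid n w -> closure_eq n w n w.
Proof. move=> h1 h2; apply: ce_braid => //; exact: beq_refl. Qed.
Lemma ce_conj' n a b u w : 1 <= n -> valid n u -> valid n w -> a = u ++ w -> b = w ++ u ->
  closure_eq n a n b.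
Proof. move=> h1 h2 h3 -> ->; exact: ce_conj. Qed.
Lemma ce_destab n w b : 1 <= n -> valid n w -> closure_eq n.+1 (w ++ [:: (n, b)]) n w.
Proof. move=> h1 h2; apply: ce_sym; exact: ce_stab. Qed.

Lemma segSr M : 1 <= M -> seg 1 M.+1 = seg 1 M ++ [:: (M, true)].
Proof.
move=> h; rewrite !seg_up //; try lia.
have -> : M.+1 - 1 = (M - 1).+1 by lia.
rewrite upSr; congr (_ ++ [:: (_, _)]); lia.
Qed.
Lemma segSl M : 1 <= M -> seg M.+1 1 = (M, true) :: seg M 1.
Proof. move=> h; by rewrite seg_rev segSr // rev_cat -seg_rev. Qed.

Lemma partB1 rho m x gamma : 1 <= rho <= m -> valid m gamma ->
  closure_eq (m + x) (gamma ++ wpow (seg 1 (m + x)) rho)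
             m (gamma ++ wpow (seg rho 1) x ++ wpow (seg 1 m) rho).
Proof.
case/andP=> hr hrm; case: rho hr hrm => // r _ hrm.
elim: x gamma => [|x IH] gamma hg.
  rewrite addn0 wpow0 /=; apply: ce_refl; vtac.
rewrite addnS; set M := m + x.
have hM : 1 <= M by lia.
have hmM : m <= M by rewrite /M; lia.
apply: (ce_trans (n' := M.+1) (w' := gamma ++ (seg r.+1 1 ++ seg 1 M.+1 ++ (wpow (seg 1 M) r)))).
  apply: ce_braid => //; try vtac. apply: beq_catl; apply: partA1; lia.
apply: (ce_trans (n' := M.+1) (w' := ((wpow (seg 1 M) r) ++ gamma ++ seg r.+1 1 ++ seg 1 M) ++ [:: (M, true)])).
  apply: (ce_conj' (u := gamma ++ seg r.+1 1 ++ seg 1 M ++ [:: (M, true)]) (w := (wpow (seg 1 M) r))); try vtac.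
  - by rewrite segSr // -!catA.
  - by rewrite -!catA.
apply: (ce_trans (n' := M) (w' := (wpow (seg 1 M) r) ++ gamma ++ seg r.+1 1 ++ seg 1 M)).
  apply: ce_destab => //; vtac.
apply: (ce_trans (n' := M) (w' := (gamma ++ seg r.+1 1) ++ wpow (seg 1 M) r.+1)).
  apply: (ce_conj' (u := (wpow (seg 1 M) r)) (w := gamma ++ seg r.+1 1 ++ seg 1 M)); try vtac.
  all: try done. by rewrite wpowS -!catA.
have hg' : valid m (gamma ++ seg r.+1 1) by vtac.
apply: ce_trans (IH _ hg') _.
rewrite wpowS -!catA; apply: ce_refl; vtac.
Qed.

Lemma partB2 rho m x gamma : 1 <= rho <= m -> valid m gamma ->
  closure_eq (m + x) (gamma ++ wpow (seg (m + x) 1) rho)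
             m (gamma ++ wpow (seg m 1) rho ++ wpow (seg 1 rho) x).
Proof.
case/andP=> hr hrm; case: rho hr hrm => // r _ hrm.
elim: x gamma => [|x IH] gamma hg.
  rewrite addn0 wpow0 cats0; apply: ce_refl; vtac.
rewrite addnS; set M := m + x.
have hM : 1 <= M by lia.
have hmM : m <= M by rewrite /M; lia.
apply: (ce_trans (n' := M.+1) (w' := gamma ++ (wpow (seg M 1) r ++ seg M.+1 1 ++ seg 1 r.+1))).
  apply: ce_braid => //; try vtac. apply: beq_catl; apply: partA2; lia.
apply: (ce_trans (n' := M.+1) (w' := (seg M 1 ++ seg 1 r.+1 ++ gamma ++ wpow (seg M 1) r) ++ [:: (M, true)])).
  apply: (ce_conj' (u := gamma ++ wpow (seg M 1) r ++ [:: (M, true)]) (w := seg M 1 ++ seg 1 r.+1)); try vtac.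
  all: try done.
  rewrite (segSl hM) -!catA; first by [].
  by rewrite -!catA.
apply: (ce_trans (n' := M) (w' := seg M 1 ++ seg 1 r.+1 ++ gamma ++ wpow (seg M 1) r)).
  apply: ce_destab => //; vtac.
apply: (ce_trans (n' := M) (w' := (seg 1 r.+1 ++ gamma) ++ wpow (seg M 1) r.+1)).
  apply: (ce_conj' (u := seg M 1) (w := seg 1 r.+1 ++ gamma ++ wpow (seg M 1) r)); try vtac.
  all: try done. by rewrite wpowSr -!catA.
have hg' : valid m (seg 1 r.+1 ++ gamma) by vtac.
apply: ce_trans (IH _ hg') _.
apply: (ce_conj' (u := seg 1 r.+1) (w := gamma ++ wpow (seg m 1) r.+1 ++ wpow (seg 1 r.+1) x)); try vtac.
all: try done. all: by rewrite ?wpowSr -?catA.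
Qed.

Lemma partB rho m x gamma : 1 <= rho <= m -> 2 <= m + x -> valid m gamma ->
     closure_eq (m + x) (gamma ++ wpow (seg 1 (m + x)) rho)
                m (gamma ++ wpow (seg rho 1) x ++ wpow (seg 1 m) rho)
  /\ closure_eq (m + x) (gamma ++ wpow (seg (m + x) 1) rho)
                m (gamma ++ wpow (seg m 1) rho ++ wpow (seg 1 rho) x).
Proof. move=> h1 _ h2; split; [exact: partB1 | exact: partB2]. Qed.

Lemma posin_mono lo hi lo' hi' w : lo' <= lo -> hi <= hi' -> posin lo hi w -> posin lo' hi' w.
Proof.
move=> h1 h2; apply: sub_all => l /andP [/andP [-> h3] h4] /=.
apply/andP; split; [exact: leq_trans h1 h3 | exact: leq_trans h4 h2].
Qed.

Lemma Jcomm N D : posin 1 N.-1 D ->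
  braid_eq N (seg N 1 ++ seg 1 N ++ D) (D ++ seg N 1 ++ seg 1 N).
Proof.
move=> hD.
apply: (beq_trans (v := seg N 1 ++ map shiftl D ++ seg 1 N)).
  apply: beq_catl; exact: shiftw.
rewrite catA (catA D); apply: beq_catr; apply: beq_sym; exact: shiftw_rev.
Qed.

Lemma delta2 k : 1 <= k -> braid_eq k (wpow (seg 1 k) k) (wpow (seg k 1) k).
Proof.
case: k => // k _; elim: k => [|k IH].
  rewrite (seg_down (a:=1) (b:=1)) //; exact: beq_refl.
apply: (beq_trans (v := seg k.+2 1 ++ seg 1 k.+2 ++ wpow (seg 1 k.+1) k.+1)).
  apply: partA1; lia.
apply: (beq_trans (v := seg k.+2 1 ++ seg 1 k.+2 ++ wpow (seg k.+1 1) k.+1)).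
  apply: beq_catl; apply: beq_catl; apply: (beq_mono _ IH); lia.
apply: (beq_trans (v := wpow (seg k.+1 1) k.+1 ++ seg k.+2 1 ++ seg 1 k.+2)).
  apply: Jcomm; apply: posin_wpow; apply: posin_seg; lia.
apply: beq_sym; apply: partA2; lia.
Qed.

Definition inv (w : bword) : bword := rev (map (fun l : letter => (l.1, ~~ l.2)) w).
Lemma inv_cons a w : inv (a :: w) = inv w ++ [:: (a.1, ~~ a.2)].
Proof. by rewrite /inv /= rev_cons cats1. Qed.
Lemma valid_inv n w : valid n (inv w) = valid n w.
Proof. by rewrite /inv valid_rev /valid all_map. Qed.

Lemma inv_r n w : valid n w -> braid_eq n (w ++ inv w) [::].
Proof.
elim: w => [|[i b] w IH] /=; first by move=> _; exact: beq_refl.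
case/andP=> /andP [h1 h2] hw; rewrite inv_cons.
apply: (beq_trans (v := [:: (i, b)] ++ [::] ++ [:: (i, ~~ b)])).
  rewrite catA; exact: (beq_ctx [:: (i, b)] [:: (i, ~~ b)] (IH hw)).
apply: beq_rel; exact: br_free.
Qed.

Lemma inv_l n w : valid n w -> braid_eq n (inv w ++ w) [::].
Proof.
elim: w => [|[i b] w IH] /=; first by move=> _; exact: beq_refl.
case/andP=> /andP [h1 h2] hw; rewrite inv_cons.
apply: (beq_trans (v := inv w ++ [::] ++ w)); last exact: IH.
rewrite -catA; apply: (@beq_ctx n (inv w) w [:: (i, ~~ b); (i, b)] [::]).
have := @br_free n i (~~ b) h1 h2; rewrite negbK /=; exact: beq_rel.
Qed.

Fixpoint Delta k : bword := if k is k'.+1 then seg 1 k ++ Delta k' else [::].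
Lemma posin_Delta k : posin 1 k (Delta k).
Proof.
elim: k => //= k IH; rewrite posin_cat; apply/andP; split.
  apply: posin_seg; lia.
apply: posin_mono IH; lia.
Qed.

Lemma flip1 N i : 1 <= i -> i < N ->
  braid_eq N (Delta N ++ [:: sig i]) (sig (N - i) :: Delta N).
Proof.
elim: N i => [|N IH] i h1 h2 //.
case: (ltnP i N) => hi.
  rewrite /= -catA.
  apply: (beq_trans (v := seg 1 N.+1 ++ (sig (N - i) :: Delta N))).
    apply: beq_catl; apply: (beq_mono _ (IH _ h1 hi)); lia.
  have -> : seg 1 N.+1 ++ sig (N - i) :: Delta N = (seg 1 N.+1 ++ [:: sig (N - i)]) ++ Delta N by rewrite -catA.
  have -> : N.+1 - i = (N - i).+1 by lia.
  apply: (@beq_catr _ _ _ (sig (N - i).+1 :: seg 1 N.+1)); apply: shift1; lia.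
have eiN : i = N by lia.
subst i; case: N IH h1 h2 hi => // N IH _ _ _.
rewrite subSnn.
have eD : Delta N.+2 = seg 1 N.+2 ++ seg 1 N.+1 ++ Delta N by [].
rewrite eD.
apply: (beq_trans (v := seg 1 N.+2 ++ seg 1 N.+1 ++ sig N.+1 :: Delta N)).
  rewrite -!catA; apply: beq_catl; apply: beq_catl.
  apply: comm_letter; try lia.
  apply: (farw_posin (lo := 1) (hi := N)); try lia; exact: posin_Delta.
have -> : seg 1 N.+1 ++ sig N.+1 :: Delta N = seg 1 N.+2 ++ Delta N by rewrite (@segSr N.+1) // -catA.
rewrite catA.
apply: (beq_trans (v := (sig 1 :: seg 1 N.+2 ++ seg 1 N.+1) ++ Delta N)).
  apply: beq_catr; apply: seg_sq; lia.
rewrite /= -catA; exact: beq_refl.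
Qed.

Definition flipl N (l : letter) : letter := (N - l.1, l.2).

Lemma flipw N w : posin 1 N w ->
  braid_eq N (Delta N ++ w) (map (flipl N) w ++ Delta N).
Proof.
elim: w => [|[i b] w IH] /=; first by move=> _; rewrite cats0; exact: beq_refl.
case/andP=> /andP [/andP [hb hi1] hi2] hw; case: b hb => // _.
apply: (beq_trans (v := (sig (N - i) :: Delta N) ++ w)).
  have -> : Delta N ++ (i, true) :: w = (Delta N ++ [:: sig i]) ++ w by rewrite -catA.
  apply: beq_catr; exact: flip1.
exact: (beq_catl [:: sig (N - i)] (IH hw)).
Qed.

Lemma ce_flip N w : 1 <= N -> posin 1 N w -> closure_eq N w N (map (flipl N) w).
Proof.
move=> hN hw.
have vD : valid N (Delta N) by apply: posin_valid; exact: posin_Delta.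
have vw : valid N w by exact: posin_valid.
have vf : valid N (map (flipl N) w).
  apply: posin_valid; move: hw; rewrite /posin all_map; apply: sub_all.
  move=> [i b] /andP [/andP [hb h1] h2] /=; rewrite /= in hb h1 h2; rewrite hb /=; apply/andP; split; lia.
apply: (ce_trans (n' := N) (w' := inv (Delta N) ++ (Delta N ++ w))).
  apply: ce_braid => //; first by rewrite !valid_cat valid_inv vD vw.
  apply: beq_sym; rewrite catA; have := beq_catr w (inv_l vD); exact.
apply: (ce_trans (n' := N) (w' := inv (Delta N) ++ (map (flipl N) w ++ Delta N))).
  apply: ce_braid => //; try by rewrite !valid_cat valid_inv vD ?vw ?vf.
  apply: beq_catl; exact: flipw.
apply: (ce_trans (n' := N) (w' := map (flipl N) w ++ (Delta N ++ inv (Delta N)))).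
  apply: ce_conj' => //; first by rewrite valid_inv.
  - by rewrite valid_cat vD vf.
  - by rewrite catA.
apply: ce_braid => //; first by rewrite !valid_cat valid_inv vD vf.
have := beq_catl (map (flipl N) w) (inv_r vD); by rewrite cats0.
Qed.

Ltac vtac2 := repeat match goal with
 | |- is_true (valid _ (_ ++ _)) => rewrite valid_cat; apply/andP; split
 | |- is_true (valid _ (wpow _ _)) => apply: valid_wpow
 | |- is_true (valid _ (seg _ _)) => apply: valid_seg; lia
 | |- is_true (valid _ [:: _]) => rewrite /valid /sig /= ?andbT; try (apply/andP; split); lia
 | H : is_true (valid ?m ?g) |- is_true (valid _ ?g) => apply: (valid_le _ H); lia
 | |- is_true (0 < _) => lia
 end.

Lemma map_wpow (f : letter -> letter) w k : map f (wpow w k) = wpow (map f w) k.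
Proof. elim: k => //= k IH; by rewrite map_cat IH. Qed.

Lemma flip_up c k : k <= c ->
  map (fun l : letter => (c.+1 - l.1, l.2)) (up 1 k) = rev (up (c.+1 - k) k).
Proof.
elim: k => [|k IH] hk //.
rewrite upSr map_cat IH; last lia.
have -> : c.+1 - k = (c - k).+1 by lia.
rewrite upS rev_cons -cats1 /=; congr (_ ++ [:: (_, _)]); lia.
Qed.

Lemma flip_segdown N : 1 <= N -> map (flipl N) (seg N 1) = seg 1 N.
Proof.
move=> hN; rewrite seg_down // seg_up // map_rev.
have := @flip_up N.-1 (N - 1) (ltac:(lia)).
have -> : N.-1.+1 = N by lia.
have -> : N - (N - 1) = 1 by lia.
rewrite /flipl => ->; by rewrite revK.
Qed.

Lemma seg12 : seg 1 2 = [:: sig 1].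
Proof. by rewrite seg_up. Qed.

Lemma ce_down rho n y j : 1 <= j -> j.+1 < rho -> 1 <= n ->
  closure_eq rho (wpow [:: sig j.+1] y ++ wpow (seg 1 rho) n)
             rho (wpow [:: sig j] y ++ wpow (seg 1 rho) n).
Proof.
move=> h1 h2; case: n => // n _.
apply: (ce_trans (n' := rho) (w' := (seg 1 rho ++ wpow [:: sig j] y) ++ wpow (seg 1 rho) n)).
  apply: ce_braid; try lia; try vtac2.
  rewrite wpowS catA; apply: beq_catr; apply: beq_sym.
  have -> : wpow [:: sig j.+1] y = map shiftl (wpow [:: sig j] y) by rewrite map_wpow.
  apply: shiftw; apply: posin_wpow; rewrite /posin /sig /= andbT; apply/andP; split; lia.
apply: (ce_conj' (u := seg 1 rho) (w := wpow [:: sig j] y ++ wpow (seg 1 rho) n)); try lia; try vtac2.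
  by rewrite catA.
by rewrite wpowSr catA.
Qed.

Lemma ce_down_iter rho n y k : k.+2 < rho.+1 -> 1 <= n ->
  closure_eq rho (wpow [:: sig k.+1] y ++ wpow (seg 1 rho) n)
             rho (wpow [:: sig 1] y ++ wpow (seg 1 rho) n).
Proof.
move=> h1 h2; elim: k h1 => [|k IH] h1.
  apply: ce_refl; try lia; vtac2.
apply: ce_trans (ce_down _ _ _ _) (IH _); lia.
Qed.

Lemma partC1 rho m n y : 2 <= rho <= m -> m <= n -> 1 <= y ->
  closure_eq n (tword [:: (m, y); (n, rho)])
             m (wpow (seg rho 1) (n - m) ++ wpow (seg 1 m) (rho + y)).
Proof.
case/andP=> h1 h2 h3 h4; rewrite /tword /= cats0.
have hg : valid m (wpow (seg 1 m) y) by vtac2.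
have := @partB1 rho m (n - m) _ (ltac:(apply/andP; split; lia)) hg.
rewrite subnKC // => H; apply: ce_trans H _.
apply: (ce_conj' (u := wpow (seg 1 m) y) (w := wpow (seg rho 1) (n - m) ++ wpow (seg 1 m) rho)); try lia; try vtac2.
  by []. by rewrite wpowD -!catA.
Qed.

Lemma partC2le rho n y : 2 <= rho <= n -> 1 <= y ->
  tlink_eq [:: (2, y); (n, rho)] [:: (2, y); (rho, n)].
Proof.
case/andP=> h1 h2 hy; rewrite /tlink_eq /tword /tstrands /= !cats0 seg12.
set g := wpow [:: sig 1] y.
have hg : valid rho g by rewrite /g; vtac2.
have := @partB1 rho rho (n - rho) g (ltac:(apply/andP; split; lia)) hg.
rewrite subnKC // => H; apply: ce_trans H _.
apply: (ce_trans (n' := rho) (w' := g ++ wpow (seg rho 1) n)).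
  apply: ce_braid; try lia; try vtac2.
  have -> : wpow (seg rho 1) n = wpow (seg rho 1) (n - rho) ++ wpow (seg rho 1) rho.
    by rewrite -wpowD subnK.
  apply: beq_catl; apply: beq_catl; apply: delta2; lia.
apply: (ce_trans (ce_flip (N := rho) _ _)); first lia.
  rewrite posin_cat; apply/andP; split; apply: posin_wpow.
    rewrite /posin /sig /= ?andbT; lia.
  apply: posin_seg; lia.
rewrite map_cat /g !map_wpow flip_segdown; last lia.
have -> : map (flipl rho) [:: sig 1] = [:: sig (rho - 2).+1].
  rewrite /= /flipl /sig /=; congr [:: (_, _)]; lia.
apply: ce_down_iter; lia.
Qed.

Lemma partC2 rho n y : 2 <= rho -> 2 <= n -> 1 <= y ->
  tlink_eq [:: (2, y); (n, rho)] [:: (2, y); (rho, n)].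
Proof.
move=> h1 h2 hy; case: (leqP rho n) => h.
  apply: partC2le => //; lia.
apply: ce_sym; apply: partC2le => //; lia.
Qed.

Lemma partC3 m n y : 2 <= m < n -> n %% m = 0 -> 1 <= y ->
  tlink_eq [:: (m, y); (n, m)] [:: (m, n + y)].
Proof.
case/andP=> h1 h2 hmod hy; rewrite /tlink_eq /tstrands /=.
apply: ce_trans (@partC1 m m n y (ltac:(apply/andP; split; lia)) (ltac:(lia)) hy) _.
set q := n %/ m.
have hn : n = q * m by rewrite /q {1}(divn_eq n m) hmod addn0.
have hq : 1 <= q by move: h2; rewrite hn; case: (q) => //; lia.
have e : n - m = m * q.-1 by rewrite hn mulnC; case: (q) hq => // q' _; rewrite mulnS addKn.
rewrite /tword /= cats0.
apply: ce_braid; try lia; try vtac2.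
have -> : wpow (seg 1 m) (n + y) = wpow (seg 1 m) (n - m) ++ wpow (seg 1 m) (m + y).
  by rewrite -wpowD addnA subnK //; lia.
apply: beq_catr; rewrite e !wpowM; apply: beq_wpow; apply: beq_sym; apply: delta2; lia.
Qed.

Theorem proposition3p1 :
  (* (a) *)
  (forall n d : nat, 2 <= n -> 1 <= d <= n ->
     braid_eq n (wpow (seg 1 n) d)
                (seg d 1 ++ seg 1 n ++ wpow (seg 1 n.-1) d.-1)
  /\ braid_eq n (wpow (seg n 1) d)
                (wpow (seg n.-1 1) d.-1 ++ seg n 1 ++ seg 1 d))
  /\
  (* (b) *)
  (forall (rho m x : nat) (gamma : bword), 1 <= rho <= m -> 2 <= m + x ->
     valid m gamma ->
     closure_eq (m + x) (gamma ++ wpow (seg 1 (m + x)) rho)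
                m (gamma ++ wpow (seg rho 1) x ++ wpow (seg 1 m) rho)
  /\ closure_eq (m + x) (gamma ++ wpow (seg (m + x) 1) rho)
                m (gamma ++ wpow (seg m 1) rho ++ wpow (seg 1 rho) x))
  /\
  (* (c) *)
  (forall rho m n y : nat, 2 <= rho <= m -> m <= n -> 1 <= y ->
     closure_eq n (tword [:: (m, y); (n, rho)])
                m (wpow (seg rho 1) (n - m) ++ wpow (seg 1 m) (rho + y)))
  /\
  (forall rho n y : nat, 2 <= rho -> 2 <= n -> 1 <= y ->
     tlink_eq [:: (2, y); (n, rho)] [:: (2, y); (rho, n)])
  /\
  (forall m n y : nat, 2 <= m < n -> n %% m = 0 -> 1 <= y ->
     tlink_eq [:: (m, y); (n, m)] [:: (m, n + y)]).
Proof.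
split; first exact: partA.
split; first exact: partB.
split; first exact: partC1.
split; first exact: partC2.
exact: partC3.
Qed.
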